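(* Let $F_{ij}$ be a dual-convex $m\times n$ net in $I^3$ that has a reciprocal-parallel net $C_{kl}$. Then the planar net obtained from the top view $\overline{C_{kl}}$ by a rotation through $\pi/2$ is Christoffel dual to the top view $\overline{p^*_{kl}}$ of the metric dual net of $F_{ij}$.
   Context: $I^3$ is $\mathbb{R}^3$ with coordinates $(x,y,z)$; isotropic = parallel to the $z$-axis; top view of $(x,y,z)$ is $(x,y)$. Metric duality: non-isotropic plane $z=P^1x+P^2y-P^3$ $\leftrightarrow$ point $(P^1,P^2,P^3)$. An $m\times n$ net: points $F_{ij}$, $0\le i\le m,0\le j\le n$, with $F_{ij},F_{i+1,j},F_{i+1,j+1},F_{i,j+1}$ consecutive vertices of a convex planar quadrilateral (face $p_{ij}$) for all $0\le i<m,0\le j<n$. Boundary vertices: $i\in\{0,m\}$ or $j\in\{0,n\}$; consecutive faces around non-boundary $F_{ij}$: $p_{i-1,j-1},p_{i,j-1},p_{ij},p_{i-1,j}$. Convex 4-hedral angle with vertex $O$: union of rays from $O$ meeting a convex quadrilateral in a plane not through $O$; flat angles: rays through one side; admissible: isotropic line through $O$ meets its interior. Dual-convex: $m,n\ge2$ and at each non-boundary vertex the four consecutive face planes are planes of four consecutive flat angles of an admissible convex 4-hedral angle. Metric dual: the $(m-1)\times(n-1)$ net of points $p^*_{kl}$. A collection $C_{kl}$, $0\le k<m,0\le l<n$, not all equal, is reciprocal-parallel to $F_{ij}$ if $C_{i,j-1}C_{ij}\parallel F_{i+1,j}F_{ij}$ for all $0\le i<m,0<j<n$ and $C_{i-1,j}C_{ij}\parallel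 F_{i,j+1}F_{ij}$ for all $0<i<m,0\le j<n$. Labeled quadrilaterals $ABCD$, $A'B'C'D'$ are dual if $AB\parallel A'B'$, $BC\parallel B'C'$, $CD\parallel C'D'$, $DA\parallel D'A'$, $AC\parallel B'D'$, $BD\parallel A'C'$; two nets are Christoffel dual if corresponding faces are dual. *)

(* Defs.v *)
From HB Require Import structures.
From mathcomp Require Import all_boot all_order all_algebra.
From mathcomp Require Import reals.

Set Implicit Arguments.
Unset Strict Implicit.
Unset Printing Implicit Defensive.

Import Order.TTheory GRing.Theory Num.Theory.
Local Open Scope ring_scope.

(* Points of I^3 = R^3 (coordinates x, y, z; z is the isotropic direction). *)
Record P3 (R : Type) := mkP3 { p3x : R; p3y : R; p3z : R }.
Record P2 (R : Type) := mkP2 { p2x : R; p2y : R }.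

Section Defs.
Variable R : realType.

Definition add3 (a b : P3 R) : P3 R :=
  mkP3 (p3x a + p3x b) (p3y a + p3y b) (p3z a + p3z b).
Definition sub3 (a b : P3 R) : P3 R :=
  mkP3 (p3x a - p3x b) (p3y a - p3y b) (p3z a - p3z b).
Definition scale3 (s : R) (a : P3 R) : P3 R :=
  mkP3 (s * p3x a) (s * p3y a) (s * p3z a).
Definition cross3 (u v : P3 R) : P3 R :=
  mkP3 (p3y u * p3z v - p3z u * p3y v)
       (p3z u * p3x v - p3x u * p3z v)
       (p3x u * p3y v - p3y u * p3x v).
Definition dot3 (u v : P3 R) : R :=
  p3x u * p3x v + p3y u * p3y v + p3z u * p3z v.

(* Parallel vectors (a zero vector counts as parallel to everything). *)
Definition par3 (u v : P3 R) : Prop := cross3 u v = mkP3 0 0 0.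

(* X lies in the plane through A, B, C (for A, B, C non-collinear). *)
Definition plane3 (A B C : P3 R) (X : P3 R) : Prop :=
  dot3 (cross3 (sub3 B A) (sub3 C A)) (sub3 X A) = 0.

Definition same_set (P Q : P3 R -> Prop) : Prop := forall X, P X <-> Q X.

(* ABCD (consecutive vertices) is a convex planar (non-degenerate)
   quadrilateral: A, B, C not collinear and the diagonals AC and BD meet at
   an interior point of both. *)
Definition convex_quad (A B C D : P3 R) : Prop :=
  ~ par3 (sub3 B A) (sub3 C A) /\
  exists s t : R, 0 < s /\ s < 1 /\ 0 < t /\ t < 1 /\
    add3 A (scale3 s (sub3 C A)) = add3 B (scale3 t (sub3 D B)).

(* m x n net: F i j for 0 <= i <= m, 0 <= j <= n. *)
Definition is_net (m n : nat) (F : nat -> nat -> P3 R) : Prop :=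
  forall i j, (i < m)%N -> (j < n)%N ->
    convex_quad (F i j) (F i.+1 j) (F i.+1 j.+1) (F i j.+1).

Definition face_plane (F : nat -> nat -> P3 R) (i j : nat) : P3 R -> Prop :=
  plane3 (F i j) (F i.+1 j) (F i.+1 j.+1).

Definition quad_interior (Q1 Q2 Q3 Q4 X : P3 R) : Prop :=
  exists l1 l2 l3 l4 : R, 0 < l1 /\ 0 < l2 /\ 0 < l3 /\ 0 < l4 /\
    l1 + l2 + l3 + l4 = 1 /\
    X = add3 (add3 (scale3 l1 Q1) (scale3 l2 Q2))
             (add3 (scale3 l3 Q3) (scale3 l4 Q4)).

Definition angle_interior (O Q1 Q2 Q3 Q4 X : P3 R) : Prop :=
  exists (q : P3 R) (lam : R), 0 < lam /\ quad_interior Q1 Q2 Q3 Q4 q /\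
    X = add3 O (scale3 lam (sub3 q O)).

(* Q1Q2Q3Q4 is a convex quadrilateral in a plane not through O, and the
   isotropic line through O meets the interior of the resulting angle. *)
Definition admissible_angle (O Q1 Q2 Q3 Q4 : P3 R) : Prop :=
  convex_quad Q1 Q2 Q3 Q4 /\ ~ plane3 Q1 Q2 Q3 O /\
  exists X, angle_interior O Q1 Q2 Q3 Q4 X /\ p3x X = p3x O /\ p3y X = p3y O.

(* Dual-convexity of an m x n net F. The flat angles of the angle are
   spanned by O and the sides Q1Q2, Q2Q3, Q3Q4, Q4Q1. *)
Definition dual_convex (m n : nat) (F : nat -> nat -> P3 R) : Prop :=
  (2 <= m)%N /\ (2 <= n)%N /\
  forall i j, (0 < i)%N -> (i < m)%N -> (0 < j)%N -> (j < n)%N ->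
    exists Q1 Q2 Q3 Q4 : P3 R,
      admissible_angle (F i j) Q1 Q2 Q3 Q4 /\
      same_set (plane3 (F i j) Q1 Q2) (face_plane F i.-1 j.-1) /\
      same_set (plane3 (F i j) Q2 Q3) (face_plane F i j.-1) /\
      same_set (plane3 (F i j) Q3 Q4) (face_plane F i j) /\
      same_set (plane3 (F i j) Q4 Q1) (face_plane F i.-1 j).

(* Metric duality: the point P corresponds to the plane z = P1 x + P2 y - P3. *)
Definition on_dual_plane (P X : P3 R) : Prop :=
  p3z X = p3x P * p3x X + p3y P * p3y X - p3z P.

Definition is_metric_dual (m n : nat) (F Pst : nat -> nat -> P3 R) : Prop :=
  forall k l, (k < m)%N -> (l < n)%N ->
    on_dual_plane (Pst k l) (F k l) /\ on_dual_plane (Pst k l) (F k.+1 l) /\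
    on_dual_plane (Pst k l) (F k.+1 l.+1) /\ on_dual_plane (Pst k l) (F k l.+1).

Definition reciprocal_parallel (m n : nat) (F C : nat -> nat -> P3 R) : Prop :=
  (exists k l k' l', (k < m)%N /\ (l < n)%N /\ (k' < m)%N /\ (l' < n)%N /\
     C k l <> C k' l') /\
  (forall i j, (i < m)%N -> (0 < j)%N -> (j < n)%N ->
     par3 (sub3 (C i j) (C i j.-1)) (sub3 (F i.+1 j) (F i j))) /\
  (forall i j, (0 < i)%N -> (i < m)%N -> (j < n)%N ->
     par3 (sub3 (C i j) (C i.-1 j)) (sub3 (F i j.+1) (F i j))).

Definition top (X : P3 R) : P2 R := mkP2 (p3x X) (p3y X).
Definition rot90 (p : P2 R) : P2 R := mkP2 (- p2y p) (p2x p).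
Definition sub2 (a b : P2 R) : P2 R := mkP2 (p2x a - p2x b) (p2y a - p2y b).
Definition par2 (u v : P2 R) : Prop := p2x u * p2y v - p2y u * p2x v = 0.

Definition dual_quads (A B C D A' B' C' D' : P2 R) : Prop :=
  par2 (sub2 B A) (sub2 B' A') /\ par2 (sub2 C B) (sub2 C' B') /\
  par2 (sub2 D C) (sub2 D' C') /\ par2 (sub2 A D) (sub2 A' D') /\
  par2 (sub2 C A) (sub2 D' B') /\ par2 (sub2 D B) (sub2 C' A').

Definition christoffel_dual (m n : nat) (G H : nat -> nat -> P2 R) : Prop :=
  forall k l, (k < m)%N -> (l < n)%N ->
    dual_quads (G k l) (G k.+1 l) (G k.+1 l.+1) (G k l.+1)
               (H k l) (H k.+1 l) (H k.+1 l.+1) (H k l.+1).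

End Defs.

(* Main.v *)
Require Import Defs.
From mathcomp Require Import all_boot all_order all_algebra.
From mathcomp Require Import reals.
From mathcomp Require Import ring lra.

Set Implicit Arguments.
Unset Strict Implicit.
Unset Printing Implicit Defensive.
Import Order.TTheory GRing.Theory Num.Theory.
Local Open Scope ring_scope.

Section Aux.
Variable R : realType.

Definition fP (P w : P3 R) : R := p3z w - (p3x P * p3x w + p3y P * p3y w).

Lemma par3_scale (a b : R) (u v : P3 R) :
  a != 0 -> scale3 a u = scale3 b v -> par3 u v.
Proof.
case: u => ux uy uz; case: v => vx vy vz /= a0 [hx hy hz].
rewrite /par3 /cross3 /=.
have E: forall p q r s : R, a * p = b * q -> a * r = b * s -> p * s - r * q = 0.
  move=> p q r s h1 h2; apply/eqP; rewrite -(mulIr_eq0 _ (mulIf a0)) /=.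
  apply/eqP; have -> : (p * s - r * q) * a = (a * p) * s - (a * r) * q by ring.
  by rewrite h1 h2; ring.
by rewrite (E _ _ _ _ hy hz) (E _ _ _ _ hz hx) (E _ _ _ _ hx hy).
Qed.

Lemma par3_0l (v : P3 R) : par3 (mkP3 0 0 0) v.
Proof. by rewrite /par3 /cross3 /=; congr mkP3; ring. Qed.

Lemma cq_BA (A B C D : P3 R) : convex_quad A B C D -> sub3 B A <> mkP3 0 0 0.
Proof. by case=> h _ e; apply: h; rewrite e; apply: par3_0l. Qed.

Lemma cq_CB (A B C D : P3 R) : convex_quad A B C D -> sub3 C B <> mkP3 0 0 0.
Proof.
case=> h _ e; apply: h; apply: (@par3_scale 1 1); first exact: oner_neq0.
move: e; case: A => ax ay az; case: B => bx by_ bz; case: C => cx cy cz.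
rewrite /sub3 /scale3 /= => -[ex ey ez]; congr mkP3; lra.
Qed.

Lemma cq_DA (A B C D : P3 R) : convex_quad A B C D -> sub3 D A <> mkP3 0 0 0.
Proof.
case=> h [s [t [s0 [s1 [t0 [t1 e]]]]]] e2; apply: h.
apply: (@par3_scale (1 - t) s); first by rewrite subr_eq0; apply/eqP => ht; lra.
move: e e2; case: A => ax ay az; case: B => bx by_ bz; case: C => cx cy cz.
case: D => dx dy dz.
rewrite /add3 /sub3 /scale3 /= => -[ex ey ez] [fx fy fz]; congr mkP3.
- have da : dx = ax by lra.
  by rewrite da in ex; lra.
- have da : dy = ay by lra.
  by rewrite da in ey; lra.
- have da : dz = az by lra.
  by rewrite da in ez; lra.
Qed.

Lemma cq_CD (A B C D : P3 R) : convex_quad A B C D -> sub3 C D <> mkP3 0 0 0.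
Proof.
case=> h [s [t [s0 [s1 [t0 [t1 e]]]]]] e2; apply: h.
apply: (@par3_scale (1 - t) (s - t)); first by rewrite subr_eq0; apply/eqP => ht; lra.
move: e e2; case: A => ax ay az; case: B => bx by_ bz; case: C => cx cy cz.
case: D => dx dy dz.
rewrite /add3 /sub3 /scale3 /= => -[ex ey ez] [fx fy fz]; congr mkP3.
- have da : dx = cx by lra.
  by rewrite da in ex; lra.
- have da : dy = cy by lra.
  by rewrite da in ey; lra.
- have da : dz = cz by lra.
  by rewrite da in ez; lra.
Qed.


Lemma on_dual_sub (P X Y : P3 R) :
  on_dual_plane P X -> on_dual_plane P Y -> fP P (sub3 X Y) = 0.
Proof.
case: P => px py pz; case: X => xx xy xz; case: Y => yx yy yz.
rewrite /on_dual_plane /fP /= => h1 h2; rewrite h1 h2; ring.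
Qed.

Lemma par_f (P w e : P3 R) :
  par3 w e -> e <> mkP3 0 0 0 -> fP P e = 0 -> fP P w = 0.
Proof.
case: P => px py pz; case: w => wx wy wz; case: e => ex ey ez.
rewrite /par3 /cross3 /fP /= => -[c1 c2 c3] ne fe.
have K : forall a : R, a != 0 -> a * (wz - (px * wx + py * wy)) = 0 ->
   wz - (px * wx + py * wy) = 0.
  by move=> a a0 /eqP; rewrite mulf_eq0 (negbTE a0) /= => /eqP.
have [hx|hx] := eqVneq ex 0; last first.
  apply: (K _ hx).
  have -> : ex * (wz - (px * wx + py * wy)) = wx * (ez - (px * ex + py * ey))
     + (wz * ex - wx * ez) + py * (wx * ey - wy * ex) by ring.
  by rewrite fe c2 c3; ring.
have [hy|hy] := eqVneq ey 0; last first.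
  apply: (K _ hy).
  have -> : ey * (wz - (px * wx + py * wy)) = wy * (ez - (px * ex + py * ey))
     - (wy * ez - wz * ey) - px * (wx * ey - wy * ex) by ring.
  by rewrite fe c1 c3; ring.
have [hz|hz] := eqVneq ez 0; last first.
  apply: (K _ hz).
  have -> : ez * (wz - (px * wx + py * wy)) = wz * (ez - (px * ex + py * ey))
     + px * (wz * ex - wx * ez) - py * (wy * ez - wz * ey) by ring.
  by rewrite fe c1 c2; ring.
by exfalso; apply: ne; rewrite hx hy hz.
Qed.

Lemma side_par (P Q A B : P3 R) :
  fP P (sub3 B A) = 0 -> fP Q (sub3 B A) = 0 ->
  par2 (sub2 (rot90 (top B)) (rot90 (top A))) (sub2 (top Q) (top P)).
Proof.
case: P => px py pz; case: Q => qx qy qz; case: A => ax ay az; case: B => bx by_ bz.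
rewrite /fP /par2 /= => h1 h2; lra.
Qed.

Lemma fP_split (P X Y Z : P3 R) :
  fP P (sub3 X Z) = fP P (sub3 X Y) + fP P (sub3 Y Z).
Proof. rewrite /fP /=; ring. Qed.

Lemma fP_opp (P X Y : P3 R) : fP P (sub3 X Y) = - fP P (sub3 Y X).
Proof. rewrite /fP /=; ring. Qed.

End Aux.

Theorem corollary1 (R : realType) (m n : nat) (F C Pst : nat -> nat -> P3 R) :
  is_net m n F ->
  dual_convex m n F ->
  reciprocal_parallel m n F C ->
  is_metric_dual m n F Pst ->
  christoffel_dual m.-1 n.-1 (fun k l => rot90 (top (C k l)))
                             (fun k l => top (Pst k l)).
Proof.
move=> hnet _ [_ [rp1 rp2]] hmd k l hk hl.
have hk1 : (k.+1 < m)%N by rewrite -ltn_predRL.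
have hl1 : (l.+1 < n)%N by rewrite -ltn_predRL.
have hk0 : (k < m)%N by apply: ltnW.
have hl0 : (l < n)%N by apply: ltnW.
have q1 := hnet k l hk0 hl0.
have q2 := hnet k.+1 l.+1 hk1 hl1.
have [d1 [d2 [d3 d4]]] := hmd k l hk0 hl0.
have [d5 [d6 [d7 d8]]] := hmd k.+1 l hk1 hl0.
have [d9 [d10 [d11 d12]]] := hmd k.+1 l.+1 hk1 hl1.
have [d13 [d14 [d15 d16]]] := hmd k l.+1 hk0 hl1.
have eD := cq_CB q1. have eL := cq_CD q1.
have eR := cq_BA q2. have eU := cq_DA q2.
have pb : par3 (sub3 (C k.+1 l) (C k l)) (sub3 (F k.+1 l.+1) (F k.+1 l)).
  exact: (rp2 k.+1 l erefl hk1 hl0).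
have pd : par3 (sub3 (C k l.+1) (C k l)) (sub3 (F k.+1 l.+1) (F k l.+1)).
  exact: (rp1 k l.+1 hk0 erefl hl1).
have pa : par3 (sub3 (C k.+1 l.+1) (C k.+1 l)) (sub3 (F k.+2 l.+1) (F k.+1 l.+1)).
  exact: (rp1 k.+1 l.+1 hk1 erefl hl1).
have pc : par3 (sub3 (C k.+1 l.+1) (C k l.+1)) (sub3 (F k.+1 l.+2) (F k.+1 l.+1)).
  exact: (rp2 k.+1 l.+1 erefl hk1 hl1).
have b1 : fP (Pst k l) (sub3 (C k.+1 l) (C k l)) = 0.
  by apply: (par_f pb eD); apply: on_dual_sub.
have b2 : fP (Pst k.+1 l) (sub3 (C k.+1 l) (C k l)) = 0.
  by apply: (par_f pb eD); apply: on_dual_sub.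
have dd1 : fP (Pst k l) (sub3 (C k l.+1) (C k l)) = 0.
  by apply: (par_f pd eL); apply: on_dual_sub.
have dd2 : fP (Pst k l.+1) (sub3 (C k l.+1) (C k l)) = 0.
  by apply: (par_f pd eL); apply: on_dual_sub.
have a1 : fP (Pst k.+1 l) (sub3 (C k.+1 l.+1) (C k.+1 l)) = 0.
  by apply: (par_f pa eR); apply: on_dual_sub.
have a2 : fP (Pst k.+1 l.+1) (sub3 (C k.+1 l.+1) (C k.+1 l)) = 0.
  by apply: (par_f pa eR); apply: on_dual_sub.
have c1 : fP (Pst k.+1 l.+1) (sub3 (C k.+1 l.+1) (C k l.+1)) = 0.
  by apply: (par_f pc eU); apply: on_dual_sub.
have c2 : fP (Pst k l.+1) (sub3 (C k.+1 l.+1) (C k l.+1)) = 0.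
  by apply: (par_f pc eU); apply: on_dual_sub.
rewrite /dual_quads; split; [|split; [|split; [|split; [|split]]]].
- exact: side_par.
- exact: side_par.
- by apply: side_par; rewrite fP_opp ?c1 ?c2 oppr0.
- by apply: side_par; rewrite fP_opp ?dd1 ?dd2 oppr0.
- apply: side_par.
  + by rewrite (fP_split _ _ (C k.+1 l)) a1 b2 addr0.
  + by rewrite (fP_split _ _ (C k l.+1)) c2 dd2 addr0.
- apply: side_par.
  + by rewrite (fP_split _ _ (C k l)) dd1 fP_opp b1 oppr0 addr0.
  + by rewrite (fP_split _ _ (C k.+1 l.+1)) fP_opp c1 a2 oppr0 addr0.
Qed.
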